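(* Let $r\ge 3$ and $n\ge\frac{(r-1)(2r+1)}{2}$, and let $\mathcal{H}$ be an $n$-vertex $\mathrm{T}_r$-free $r$-graph with at least one edge and with $\delta_{r-1}^{+}(\mathcal{H})>\frac{2n}{2r+1}$. Then there exist $r$ pairwise disjoint sets $V_1,\ldots,V_r\subseteq V(\mathcal{H})$, each independent in $\mathcal{H}$, such that $\min\{|V_1|,\ldots,|V_r|\}>\frac{2n}{2r+1}$.
   Context: An $r$-graph $\mathcal{H}$ is a collection of $r$-subsets (edges) of a finite vertex set $V(\mathcal{H})$. The shadow is $\partial\mathcal{H}=\{e\in\binom{V(\mathcal{H})}{r-1}\colon e\subseteq E \text{ for some } E\in\mathcal{H}\}$. For $e\in\partial\mathcal{H}$, $N_{\mathcal{H}}(e)=\{v\in V(\mathcal{H})\colon e\cup\{v\}\in\mathcal{H}\}$. The minimum positive codegree is $\delta_{r-1}^{+}(\mathcal{H})=\min\{|N_{\mathcal{H}}(e)|\colon e\in\partial\mathcal{H}\}$. A set $I\subseteq V(\mathcal{H})$ is independent in $\mathcal{H}$ if every edge contains at most one vertex of $I$. The $r$-uniform generalized triangle is $\mathrm{T}_r=\{\{1,\ldots,r-1,r\},\{1,\ldots,r-1,r+1\},\{r,r+1,\ldots,2r-1\}\}$; $\mathcal{H}$ is $\mathrm{T}_r$-free if it contains no subhypergraph isomorphic to $\mathrm{T}_r$. *)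

(* Defs.v *)
From mathcomp Require Import all_boot.
Set Implicit Arguments. Unset Strict Implicit. Unset Printing Implicit Defensive.

Definition uniform (T : finType) (r : nat) (H : {set {set T}}) : Prop :=
  forall E, E \in H -> #|E| = r.

Definition shadow (T : finType) (r : nat) (H : {set {set T}}) : {set {set T}} :=
  [set e : {set T} | (#|e| == r.-1) && [exists E in H, e \subset E]].

Definition nbhd (T : finType) (H : {set {set T}}) (e : {set T}) : {set T} :=
  [set v | e :|: [set v] \in H].

(* delta^+_{r-1}(H) > 2n/(2r+1), written without division *)
Definition min_pos_codeg_gt (T : finType) (r : nat) (H : {set {set T}}) : Prop :=
  forall e, e \in shadow r H -> 2 * #|T| < (2 * r + 1) * #|nbhd H e|.

Definition independent (T : finType) (H : {set {set T}}) (I : {set T}) : Prop :=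
  forall E, E \in H -> #|E :&: I| <= 1.

(* The r-uniform generalized triangle on vertex set 'I_(2r-1)
   (vertex k+1 of the paper is index k here):
   {0..r-2, r-1}, {0..r-2, r}, {r-1, r, ..., 2r-2}. *)
Definition Tr (r : nat) : {set {set 'I_(2 * r - 1)}} :=
  [set [set i : 'I_(2 * r - 1) | i < r];
       [set i : 'I_(2 * r - 1) | (i < r.-1) || (i == r :> nat)];
       [set i : 'I_(2 * r - 1) | r.-1 <= i]].

Definition Tr_free (T : finType) (r : nat) (H : {set {set T}}) : Prop :=
  ~ exists f : 'I_(2 * r - 1) -> T,
      injective f /\ forall E, E \in Tr r -> f @: E \in H.

(* Main.v *)
Require Import Defs.
From mathcomp Require Import all_boot zify.
Set Implicit Arguments. Unset Strict Implicit.

Ltac rlia := match goal with H : is_true (2 < _) |- _ => clear - H; lia end.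

Lemma img_nth (T : finType) m (L : seq T) (x0 : T) (P : pred nat) :
  uniq L -> size L = m ->
  (fun i : 'I_m => nth x0 L i) @: [set i : 'I_m | P (nat_of_ord i)] =
  [set x | (x \in L) && P (index x L)].
Proof.
move=> uL sL; apply/setP => x; rewrite inE; apply/imsetP/andP.
- case=> i; rewrite inE => Pi ->; split.
    by apply: mem_nth; rewrite sL ltn_ord.
  by rewrite index_uniq // sL ltn_ord.
- case=> xL Px. have hi : index x L < m by rewrite -sL index_mem.
  by exists (Ordinal hi); rewrite ?inE //= nth_index.
Qed.

Lemma nb_notin (T : finType) r (H : {set {set T}}) (e : {set T}) v :
  0 < r -> uniform r H -> #|e| = r.-1 -> v \in nbhd H e -> v \notin e.
Proof.
move=> r0 HU he; rewrite inE => Hv; apply/negP => ve.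
have := HU _ Hv. rewrite (setUidPl _) ?sub1set // he. lia.
Qed.

Lemma k0 (T : finType) r (H : {set {set T}}) (e : {set T}) u w (F : {set T}) :
  3 <= r -> uniform r H -> Tr_free r H -> #|e| = r.-1 ->
  F \in H -> u != w -> u \in F -> w \in F -> u \in nbhd H e -> w \in nbhd H e ->
  F :&: e = set0 -> False.
Proof.
move=> r3 HU HT he HF uw uF wF uN wN Fe.
have ue := nb_notin (ltnW (ltnW r3)) HU he uN.
have we := nb_notin (ltnW (ltnW r3)) HU he wN.
have Fe' : forall x, x \in F -> x \notin e.
  move=> x xF; apply/negP => xe.
  by have := in_set0 x; rewrite -Fe inE xF xe.
set s := enum e; set t := enum (F :\ u :\ w); set L := s ++ u :: w :: t.
have ss : size s = r.-1 by rewrite -cardE.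
have st : size t = r - 2.
  rewrite -cardE. have := HU _ HF. rewrite (cardsD1 u) uF (cardsD1 w (F :\ u)) !inE eq_sym uw wF /=. rlia.
have sL : size L = 2 * r - 1 by rewrite size_cat /= ss st; rlia.
have tF : forall x, x \in t -> [&& x != w, x != u & x \in F] by move=> x; rewrite mem_enum !inE.
have uL : uniq L.
  rewrite cat_uniq enum_uniq /= enum_uniq andbT; apply/and3P; split.
  - rewrite !mem_enum (negbTE ue) (negbTE we) /=; apply/hasPn => x /tF /and3P[_ _ /Fe'].
    by rewrite mem_enum.
  - rewrite inE negb_or uw /=; apply/negP => /tF /and3P[_]; by rewrite eqxx.
  - by apply/negP => /tF /and3P[]; rewrite eqxx.
apply: HT; exists (fun i : 'I_(2 * r - 1) => nth u L i); split.
  move=> i j /eqP; rewrite nth_uniq ?sL ?ltn_ord // => /eqP; exact: val_inj.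
have memL : forall x, (x \in L) = [|| x \in e, x == u, x == w | x \in F :\ u :\ w].
  by move=> x; rewrite mem_cat !inE mem_enum /t mem_enum !inE.
have idxe : forall x, x \in e -> index x L < r.-1.
  by move=> x xe; rewrite index_cat mem_enum xe -ss index_mem mem_enum.
have idxo : forall x, x \notin e -> index x L = r.-1 + index x (u :: w :: t).
  by move=> x xe; rewrite index_cat mem_enum (negbTE xe) ss.
clearbody L t s.
move=> E0; rewrite /Tr. rewrite !inE => /orP[/orP[/eqP->|/eqP->]|/eqP->].
- rewrite (@img_nth _ _ L u (fun n => n < r)) //.
  suff -> : [set x | (x \in L) && (index x L < r)] = e :|: [set u] by rewrite inE in uN.
  apply/setP => x; rewrite !inE memL.
  case xe: (x \in e) => /=; first by have := idxe x xe; rlia.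
  rewrite idxo ?xe //= !inE.
  case: (x =P u) => [->|/eqP xu]; first by rewrite eqxx /=; rlia.
  rewrite [u == x]eq_sym (negbTE xu) /=.
  case: (x =P w) => [->|/eqP xw]; first by rewrite eqxx /=; rlia.
  rewrite [w == x]eq_sym (negbTE xw) /=. rlia.
- rewrite (@img_nth _ _ L u (fun n => (n < r.-1) || (n == r))) //.
  suff -> : [set x | (x \in L) && ((index x L < r.-1) || (index x L == r))] = e :|: [set w] by rewrite inE in wN.
  apply/setP => x; rewrite !inE memL.
  case xe: (x \in e) => /=; first by have := idxe x xe; rlia.
  rewrite idxo ?xe //= !inE.
  case: (x =P u) => [->|/eqP xu]; first by rewrite eqxx /= eq_sym (negbTE uw) /=; rlia.
  rewrite [u == x]eq_sym (negbTE xu) /=.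
  case: (x =P w) => [->|/eqP xw]; first by rewrite eqxx /=; rlia.
  rewrite [w == x]eq_sym (negbTE xw) /=. rlia.
- rewrite (@img_nth _ _ L u (fun n => r.-1 <= n)) //.
  suff -> : [set x | (x \in L) && (r.-1 <= index x L)] = F by [].
  apply/setP => x; rewrite !inE memL.
  case xe: (x \in e) => /=.
    have := idxe x xe. have : x \notin F by apply/negP => /Fe'; rewrite xe.
    by move=> /negbTE ->; rlia.
  rewrite idxo ?xe //= !inE.
  case: (x =P u) => [->|/eqP xu]; first by rewrite eqxx uF /=; rlia.
  rewrite [u == x]eq_sym (negbTE xu) /=.
  case: (x =P w) => [->|/eqP xw]; first by rewrite eqxx wF /=; rlia.
  rewrite [w == x]eq_sym (negbTE xw) /=. by rewrite leq_addr andbT.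
Qed.

Lemma indep_nbhd (T : finType) r (H : {set {set T}}) (e : {set T}) :
  3 <= r -> (r - 1) * (2 * r + 1) <= 2 * #|T| -> uniform r H -> Tr_free r H ->
  min_pos_codeg_gt r H -> #|e| = r.-1 -> independent H (nbhd H e).
Proof.
move=> r3 hn HU HT HC he F HF; rewrite leqNgt; apply/negP => /card_gt1P [u [w [uI wI uw]]].
move: uI wI; rewrite !in_setI => /andP [uF uN] /andP [wF wN].
have ue := nb_notin (ltnW (ltnW r3)) HU he uN.
have we := nb_notin (ltnW (ltnW r3)) HU he wN.
move: {2}#|F :&: e| (erefl #|F :&: e|) => k.
elim: k F HF uF wF => [|k IH] F HF uF wF hk.
  exact: (k0 r3 HU HT he HF uw uF wF uN wN (cards0_eq hk)).
have : 0 < #|F :&: e| by rewrite hk.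
move=> /card_gt0P [y yFe]. move: (yFe); rewrite inE => /andP [yF ye].
set g := F :\ y.
have hg : g \in shadow r H.
  rewrite inE; apply/andP; split.
    by rewrite /g; have := HU _ HF; rewrite (cardsD1 y F) yF; rlia.
  by apply/existsP; exists F; rewrite HF subD1set.
have hc := HC _ hg.
have : ~~ (nbhd H g \subset e).
  apply/negP => /subset_leq_card; rewrite he => hle.
  have : (2 * r + 1) * (r - 1) < (2 * r + 1) * #|nbhd H g|.
    by rewrite mulnC; exact: (leq_ltn_trans hn hc).
  rewrite ltn_pmul2l ?addn1 // => hlt. move: hle hlt; rlia.
move=> /subsetPn [z zN ze].
have HF' : g :|: [set z] \in H by move: zN; rewrite inE.
have uy : u != y by apply/eqP => uy; move: ue; rewrite uy ye.
have wy : w != y by apply/eqP => wy; move: we; rewrite wy ye.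
apply: (IH _ HF'); rewrite ?inE ?uy ?wy ?uF ?wF //.
suff -> : (g :|: [set z]) :&: e = (F :&: e) :\ y.
  by move: hk; rewrite (cardsD1 y (F :&: e)) yFe => -[].
apply/setP => x; rewrite !inE.
case: (x =P z) => [->|_]; first by rewrite (negbTE ze) !andbF.
by rewrite orbF andbA.
Qed.

Theorem claim2p3 (r : nat) (T : finType) (H : {set {set T}}) :
  3 <= r ->
  (r - 1) * (2 * r + 1) <= 2 * #|T| ->
  uniform r H ->
  Tr_free r H ->
  H != set0 ->
  min_pos_codeg_gt r H ->
  exists V : 'I_r -> {set T},
    (forall i j, i != j -> [disjoint V i & V j]) /\
    (forall i, independent H (V i)) /\
    (forall i, 2 * #|T| < (2 * r + 1) * #|V i|).
Proof.
move=> r3 hn HU HT /set0Pn [E HE] HC.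
have hE := HU _ HE.
have [x0 _] : exists x0, x0 \in E by apply/card_gt0P; rewrite hE; rlia.
set vs := enum E.
have svs : size vs = r by rewrite -cardE.
have uvs : uniq vs by exact: enum_uniq.
pose v (i : 'I_r) := nth x0 vs i.
have vE : forall i, v i \in E.
  by move=> i; rewrite -mem_enum; apply: mem_nth; rewrite svs ltn_ord.
have vinj : forall i j, v i = v j -> i = j.
  move=> i j /eqP; rewrite nth_uniq ?svs ?ltn_ord // => /eqP; exact: val_inj.
have ce : forall i, #|E :\ v i| = r.-1.
  by move=> i; move: hE; rewrite (cardsD1 (v i) E) vE; rlia.
have sh : forall i, E :\ v i \in shadow r H.
  move=> i; rewrite inE ce eqxx /=; apply/existsP; exists E; by rewrite HE subD1set.
have ind : forall i, independent H (nbhd H (E :\ v i)).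
  by move=> i; exact: (indep_nbhd r3 hn HU HT HC (ce i)).
exists (fun i => nbhd H (E :\ v i)); split; last split.
- move=> i j ij; rewrite -setI_eq0; apply/set0Pn => -[x].
  rewrite in_setI => /andP [xi xj].
  have xnot := nb_notin (ltnW (ltnW r3)) HU (ce j) xj.
  have vij : v i != v j by apply/eqP => /vinj /eqP; rewrite (negbTE ij).
  have viEj : v i \in E :\ v j by rewrite !inE vij vE.
  have xvi : v i != x by apply/eqP => h; move: xnot; rewrite -h viEj.
  have vii : v i \in nbhd H (E :\ v i) by rewrite inE setUC setD1K.
  have B : (E :\ v j) :|: [set x] \in H by move: xj; rewrite inE.
  have := ind i _ B.
  have : [set v i; x] \subset (E :\ v j :|: [set x]) :&: nbhd H (E :\ v i).
    apply/subsetP => y; rewrite in_set2 => /orP [/eqP->|/eqP->].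
      by rewrite in_setI in_setU viEj vii.
    by rewrite in_setI in_setU in_set1 eqxx orbT xi.
  move=> /subset_leq_card; rewrite cards2 xvi => h1 h2.
  by move: (leq_trans h1 h2).
- exact: ind.
- by move=> i; apply: HC.
Qed.
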